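(* Let $B$ be a minimum-weight basis of the weighted uncertainty matroid $\mathcal{M}=(E,\mathcal{I},A,w)$. A set $Q\subseteq E$ is a certificate that verifies $B$ if and only if for every $f\in E\setminus B$ and every $e\in C_f\setminus\{f\}$, where $C_f$ is the fundamental circuit of $f$ with respect to $B$, we have $U_e(Q)\le L_f(Q)$.
   Context: A weighted uncertainty matroid $\mathcal{M}=(E,\mathcal{I},A,w)$ consists of a matroid $M=(E,\mathcal{I})$ on a finite set $E$, for each $e\in E$ a non-empty finite union $A_e$ of bounded real intervals (each open or closed), and a weight $w_e\in A_e$. Let $L_e=\inf A_e$, $U_e=\sup A_e$. A minimum-weight basis is a basis of $M$ minimizing the sum of weights $w$. A weight assignment is $w^*:E\to\mathbb{R}$ with $w^*_e\in A_e$, consistent with $Q$ if $w^*_e=w_e$ for $e\in Q$. $Q$ verifies $B$ (is a certificate for $B$) if for every weight assignment consistent with $Q$, $B$ is a minimum-weight basis with respect to it. For $Q\subseteq E$: $L_e(Q)=w_e$ if $e\in Q$, else $L_e$; $U_e(Q)=w_e$ if $e\in Q$, else $U_e$. For a basis $B$ and $f\notin B$, the fundamental circuit $C_f$ is the unique circuit contained in $B\cup\{f\}$. *)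

(* Defs.v *)
From mathcomp Require Import all_boot all_order all_algebra.
From mathcomp Require Import boolp classical_sets reals.
Set Implicit Arguments. Unset Strict Implicit. Unset Printing Implicit Defensive.
Import Order.TTheory GRing.Theory Num.Theory.
Local Open Scope ring_scope.
Local Open Scope classical_set_scope.

Record matroid (E : finType) := Matroid {
  indep : {set E} -> bool;
  indep0 : indep (@finset.set0 E);
  indep_sub : forall X Y : {set E}, X \subset Y -> indep Y -> indep X;
  indep_exch : forall X Y : {set E}, indep X -> indep Y -> (#|X| < #|Y|)%N ->
      exists2 y, y \in Y :\: X & indep (y |: X)
}.

Definition is_basis (E : finType) (M : matroid E) (B : {set E}) : bool :=
  maxset (indep M) B.
Definition is_circuit (E : finType) (M : matroid E) (C : {set E}) : bool :=
  minset (fun X => ~~ indep M X) C.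

Record uinterval (R : realType) := UInterval { lo : R; hi : R; closed : bool }.
Definition in_uinterval (R : realType) (I : uinterval R) (x : R) : bool :=
  if closed I then (lo I <= x) && (x <= hi I) else (lo I < x) && (x < hi I).

Definition area (R : realType) (s : seq (uinterval R)) : set R :=
  [set x | has (fun I => in_uinterval I x) s].

Definition Lb (R : realType) (s : seq (uinterval R)) : R := inf (area s).
Definition Ub (R : realType) (s : seq (uinterval R)) : R := sup (area s).

Definition LQ (R : realType) (E : finType) (A : E -> seq (uinterval R))
  (w : E -> R) (Q : {set E}) (e : E) : R := if e \in Q then w e else Lb (A e).
Definition UQ (R : realType) (E : finType) (A : E -> seq (uinterval R))
  (w : E -> R) (Q : {set E}) (e : E) : R := if e \in Q then w e else Ub (A e).

Definition weight (R : realType) (E : finType) (w : E -> R) (B : {set E}) : R :=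
  \sum_(e in B) w e.

Definition min_weight_basis (R : realType) (E : finType) (M : matroid E)
  (w : E -> R) (B : {set E}) : Prop :=
  is_basis M B /\ forall B', is_basis M B' -> weight w B <= weight w B'.

Definition consistent (R : realType) (E : finType) (A : E -> seq (uinterval R))
  (w : E -> R) (Q : {set E}) (w' : E -> R) : Prop :=
  (forall e, area (A e) (w' e)) /\ (forall e, e \in Q -> w' e = w e).

Definition verifies (R : realType) (E : finType) (M : matroid E)
  (A : E -> seq (uinterval R)) (w : E -> R) (Q B : {set E}) : Prop :=
  forall w' : E -> R, consistent A w Q w' -> min_weight_basis M w' B.

(* Main.v *)
Require Import Defs.
From mathcomp Require Import all_boot all_order all_algebra.
From mathcomp Require Import boolp classical_sets reals.
From mathcomp Require Import zify lra.
Import fintype finset.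
Import Order.TTheory GRing.Theory Num.Theory.
Set Implicit Arguments. Unset Strict Implicit.

Lemma aug (E : finType) (M : matroid E) n : forall X Y : {set E},
  indep M X -> indep M Y -> (#|X| + n = #|Y|)%N ->
  exists Z : {set E}, [/\ indep M Z, X \subset Z, Z \subset X :|: Y & #|Z| = #|Y|].
Proof.
elim: n => [|n IH] X Y iX iY hc.
  by exists X; rewrite subxx finset.subsetUl -hc addn0.
have [y /setDP [yY yX] iyX] := indep_exch iX iY (ltac:(by rewrite -hc addnS ltnS leq_addr) : (#|X| < #|Y|)%N).
have := IH (y |: X) Y iyX iY; rewrite cardsU1 yX => /(_ ltac:(by rewrite -hc /= add1n addSn addnS)).
case=> Z [iZ sZ sZU cZ]; exists Z; split => //.
  exact: (@fintype.subset_trans _ _ (y |: X)) (subsetU1 y X) sZ.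
apply: (fintype.subset_trans sZU); apply/subsetP => x; rewrite !inE.
by case/orP=> [/orP [/eqP ->|->]|->]; rewrite ?yY ?orbT.
Qed.

Lemma basis_big (E : finType) (M : matroid E) (B Y : {set E}) :
  is_basis M B -> indep M Y -> (#|Y| <= #|B|)%N.
Proof.
move=> /maxsetP [iB mB] iY; rewrite leqNgt; apply/negP => lt.
have [y /setDP [yY yB] iyB] := indep_exch iB iY lt.
have := mB _ iyB (finset.subsetUr _ _) => e.
by move: yB; rewrite -e setU11.
Qed.

Lemma card_basis (E : finType) (M : matroid E) (B X : {set E}) :
  is_basis M B -> indep M X -> #|X| = #|B| -> is_basis M X.
Proof.
move=> bB iX cX; rewrite /is_basis; apply/maxsetP; split => // Y iY sXY.
apply/eqP; rewrite eq_sym eqEcard sXY /= cX.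
exact: (basis_big bB iY).
Qed.

Lemma circ_indep (E : finType) (M : matroid E) (C : {set E}) e :
  is_circuit M C -> e \in C -> indep M (C :\ e).
Proof.
move=> /minsetP [_ mC] eC; apply/negPn/negP => d.
have := mC _ d (subD1set _ _) => h.
by move: eC; rewrite -h setD11.
Qed.

Lemma circ_dep (E : finType) (M : matroid E) (C : {set E}) :
  is_circuit M C -> ~~ indep M C.
Proof. by move=> /minsetP []. Qed.

Lemma exists_circ (E : finType) (M : matroid E) (B : {set E}) f :
  is_basis M B -> f \notin B -> exists C, is_circuit M C /\ C \subset f |: B.
Proof.
move=> /maxsetP [iB mB] fB.
have dep : ~~ indep M (f |: B).
  apply/negP => i; have := mB _ i (subsetU1 _ _) => h.
  by move: fB; rewrite -h setU11.
have [C mC sC] := @minset_exists _ (fun X => ~~ indep M X) _ dep.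
by exists C.
Qed.

Lemma circ_f (E : finType) (M : matroid E) (B C : {set E}) f :
  is_basis M B -> is_circuit M C -> C \subset f |: B -> f \in C.
Proof.
move=> /maxsetP [iB _] cC sC; apply/negPn/negP => fC.
have sCB : C \subset B.
  apply/subsetP => x xC; have := subsetP sC x xC; rewrite !inE.
  by case/orP => // /eqP ex; move: fC; rewrite -ex xC.
by move: (circ_dep cC); rewrite (indep_sub sCB iB).
Qed.

Lemma circ_sub (E : finType) (M : matroid E) (C Z : {set E}) e :
  is_circuit M C -> e \in C -> C :\ e \subset Z -> e \in Z -> ~~ indep M Z.
Proof.
move=> cC eC sZ eZ; apply/negP => iZ.
have sCZ : C \subset Z.
  apply/subsetP => x xC; case: (eqVneq x e) => [->//|xe].
  by apply: (subsetP sZ); rewrite !inE xe xC.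
by move: (circ_dep cC); rewrite (indep_sub sCZ iZ).
Qed.

Lemma swap1 (E : finType) (M : matroid E) (B C : {set E}) f e :
  is_basis M B -> f \notin B -> is_circuit M C -> C \subset f |: B ->
  e \in C -> e != f -> is_basis M ((f |: B) :\ e).
Proof.
move=> bB fB cC sC eC ef.
have iI := circ_indep cC eC.
have iB := maxsetp bB.
have le := basis_big bB iI.
have [Z [iZ sIZ sZ cZ]] := aug (n:=#|B| - #|C :\ e|) iI iB (subnKC le).
have eZ : e \notin Z by apply/negP => eZ; move: (circ_sub cC eC sIZ eZ); rewrite iZ.
have efB : e \in f |: B by apply: (subsetP sC).
have sZ' : Z \subset (f |: B) :\ e.
  apply/subsetP => x xZ; rewrite in_setD1.
  have -> : x != e by apply/negP => /eqP xe; move: eZ; rewrite -xe xZ.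
  have := subsetP sZ x xZ; rewrite finset.in_setU => /orP [xI|xB].
    by apply: (subsetP sC); move: xI; rewrite in_setD1 => /andP [].
  by rewrite in_setU1 xB orbT.
have cD : #|(f |: B) :\ e| = #|B|.
  move: (cardsD1 e (f |: B)); rewrite efB cardsU1 fB /= !add1n => [[h]]; by rewrite h.
have eqZ : Z = (f |: B) :\ e.
  by apply/eqP; rewrite eqEcard sZ' cD cZ /=.
by apply: (card_basis bB); rewrite -?eqZ.
Qed.

Lemma swap2 (E : finType) (M : matroid E) (B B' C : {set E}) f :
  is_basis M B -> is_basis M B' -> f \in B' -> is_circuit M C ->
  C \subset f |: B -> f \in C ->
  exists e, [/\ e \in C, e != f, e \notin B' & is_basis M (e |: (B' :\ f))].
Proof.
move=> bB bB' fB' cC sC fC.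
have iI := circ_indep cC fC.
have iB' := maxsetp bB'.
have le := basis_big bB' iI.
have [Z [iZ sIZ sZ cZ]] := aug (n:=#|B'| - #|C :\ f|) iI iB' (subnKC le).
have fZ : f \notin Z by apply/negP => fZ; move: (circ_sub cC fC sIZ fZ); rewrite iZ.
have iX : indep M (B' :\ f) := indep_sub (subD1set _ _) iB'.
have cX : #|B'| = (#|B' :\ f|).+1 by have := cardsD1 f B'; rewrite fB'.
have [e /setDP [eZ eX] ieX] := indep_exch iX iZ (ltac:(by rewrite cZ cX)).
have ef : e != f by apply/negP => /eqP ef; move: fZ; rewrite -ef eZ.
have eI : e \in C :\ f.
  have := subsetP sZ e eZ; rewrite finset.in_setU => /orP [//|eB'].
  by move: eX; rewrite in_setD1 ef eB'.
have eB' : e \notin B' by move: eX; rewrite in_setD1 ef.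
exists e; split => //.
  by move: eI; rewrite in_setD1 => /andP [].
apply: (card_basis bB') => //.
by rewrite cardsU1 in_setD1 (negbTE eB') andbF cX.
Qed.

Local Open Scope ring_scope.

Lemma opt (R : realType) (E : finType) (M : matroid E) (w : E -> R) (B : {set E}) :
  is_basis M B ->
  (forall f, f \notin B -> forall C : {set E}, is_circuit M C -> C \subset f |: B ->
     forall e, e \in C -> e != f -> w e <= w f) ->
  forall B', is_basis M B' -> weight w B <= weight w B'.
Proof.
move=> bB H B' bB'.
have [n] := ubnP #|B' :\: B|; elim: n B' bB' => [//|n IH] B' bB' hn.
case: (boolP (B' \subset B)) => [|/subsetPn [f fB' fB]].
  move=> sB; have [_ mB'] := maxsetP bB'.
  by rewrite (mB' _ (maxsetp bB) sB).
have [C [cC sC]] := exists_circ bB fB.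
have fC := circ_f bB cC sC.
have [e [eC ef eB' bB'']] := swap2 bB bB' fB' cC sC fC.
have le := H f fB C cC sC e eC ef.
have eB : e \in B.
  by have := subsetP sC e eC; rewrite in_setU1 (negbTE ef).
apply: (le_trans (IH _ bB'' _)).
  rewrite ltnS in hn; apply: leq_trans hn; apply: proper_card.
  rewrite properE; apply/andP; split.
    apply/subsetP => x; rewrite !inE => /andP [xB xU]; rewrite xB /=.
    case/orP: xU => [/eqP xe|/andP [_ ->//]].
    by move: xB; rewrite xe eB.
  apply/subsetPn; exists f; first by rewrite !inE fB fB'.
  by rewrite !inE fB eqxx /= orbF; apply/eqP => fe; move: fB; rewrite fe eB.
rewrite /weight big_setU1 ?in_setD1 ?(negbTE eB') ?andbF //=.
rewrite [X in _ <= X](big_setD1 f fB') /=.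
by rewrite lerD2r.
Qed.


Lemma area_ub (R : realType) (s : seq (uinterval R)) :
  exists Mb : R, forall y, area s y -> y <= Mb.
Proof.
elim: s => [|J s [Mb HMb]].
  by exists 0 => y; rewrite /area /=.
exists (Num.max (hi J) Mb) => y; rewrite /area /= => /orP [hI|hs].
  rewrite le_max; apply/orP; left; move: hI; rewrite /in_uinterval.
  case: (Defs.closed J) => /andP [_ h]; [exact: h | exact: ltW h].
rewrite le_max; apply/orP; right; exact: HMb.
Qed.

Lemma area_lb (R : realType) (s : seq (uinterval R)) :
  exists Mb : R, forall y, area s y -> Mb <= y.
Proof.
elim: s => [|J s [Mb HMb]].
  by exists 0 => y; rewrite /area /=.
exists (Num.min (lo J) Mb) => y; rewrite /area /= => /orP [hI|hs].
  rewrite ge_min; apply/orP; left; move: hI; rewrite /in_uinterval.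
  case: (Defs.closed J) => /andP [h _]; [exact: h | exact: ltW h].
rewrite ge_min; apply/orP; right; exact: HMb.
Qed.

Lemma le_Ub (R : realType) (s : seq (uinterval R)) x : area s x -> x <= Ub s.
Proof.
move=> ax; have [Mb HMb] := area_ub s.
by apply: (ub_le_sup _ ax); exists Mb.
Qed.

Lemma Lb_le (R : realType) (s : seq (uinterval R)) x : area s x -> Lb s <= x.
Proof.
move=> ax; have [Mb HMb] := area_lb s.
by apply: (ge_inf _ ax); exists Mb.
Qed.

Lemma key (R : realType) (E : finType) (M : matroid E)
  (A : E -> seq (uinterval R)) (w : E -> R)
  (hw : forall e, area (A e) (w e)) (B Q : {set E}) :
  is_basis M B -> verifies M A w Q B ->
  forall f, f \notin B -> forall C : {set E}, is_circuit M C -> C \subset f |: B ->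
  forall e, e \in C -> e != f ->
  forall x y, area (A e) x -> (e \in Q -> x = w e) ->
  area (A f) y -> (f \in Q -> y = w f) -> x <= y.
Proof.
move=> bB V f fB C cC sC e eC ef x y ax hx ay hy.
pose w' := fun g => if g == e then x else if g == f then y else w g.
have cons : consistent A w Q w'.
  split => g; rewrite /w'.
    by case: (eqVneq g e) => [->|ge] //; case: (eqVneq g f) => [->|gf].
  case: (eqVneq g e) => [-> /hx //|ge].
  by case: (eqVneq g f) => [-> /hy //|gf].
have [_ mw] := V w' cons.
have b2 := swap1 bB fB cC sC eC ef.
have := mw _ b2; rewrite /weight.
have efB : e \in f |: B by apply: (subsetP sC).
have h1 : \sum_(i in f |: B) w' i = w' e + \sum_(i in (f |: B) :\ e) w' i := big_setD1 _ efB.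
have h2 : \sum_(i in f |: B) w' i = w' f + \sum_(i in B) w' i := big_setU1 _ fB.
have -> : \sum_(i in (f |: B) :\ e) w' i = \sum_(i in f |: B) w' i - w' e.
  by rewrite h1 addrC addKr.
rewrite h2 /w' eqxx (negbTE (ef : e != f)) eq_sym (negbTE ef) eqxx.
move=> h; lra.
Qed.

Unset Implicit Arguments.
Unset Strict Implicit.

Theorem corollary9 (R : realType) (E : finType) (M : matroid E)
  (A : E -> seq (uinterval R)) (w : E -> R)
  (hw : forall e, area (A e) (w e))
  (B : {set E}) (hB : min_weight_basis M w B) (Q : {set E}) :
  verifies M A w Q B <->
  (forall f, f \notin B -> forall C : {set E}, is_circuit M C -> C \subset f |: B ->
     forall e, e \in C -> e != f -> UQ A w Q e <= LQ A w Q f).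
Proof.
have bB := hB.1.
split.
  move=> V f fB C cC sC e eC ef.
  have K := key hw bB V fB cC sC eC ef.
  rewrite /UQ /LQ /Lb /Ub.
  case: (boolP (e \in Q)) => eQ; case: (boolP (f \in Q)) => fQ.
  - exact: (K _ _ (hw e) (fun _ => erefl) (hw f) (fun _ => erefl)).
  - apply: lb_le_inf; first by exists (w f).
    move=> y ay; apply: (K _ _ (hw e) (fun _ => erefl) ay).
    by move=> h; move: fQ; rewrite h.
  - apply: ge_sup; first by exists (w e).
    move=> x ax; apply: (K _ _ ax _ (hw f) (fun _ => erefl)).
    by move=> h; move: eQ; rewrite h.
  - apply: ge_sup; first by exists (w e).
    move=> x ax; apply: lb_le_inf; first by exists (w f).
    move=> y ay; apply: (K _ _ ax _ ay).
      by move=> h; move: eQ; rewrite h.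
    by move=> h; move: fQ; rewrite h.
move=> H w' [ca cq]; split => //.
apply: opt bB _ => f fB C cC sC e eC ef.
have h1 : w' e <= UQ A w Q e.
  rewrite /UQ; case: ifP => eQ; [by rewrite cq | exact: le_Ub (ca e)].
have h2 : LQ A w Q f <= w' f.
  rewrite /LQ; case: ifP => fQ; [by rewrite cq | exact: Lb_le (ca f)].
exact: le_trans h1 (le_trans (H f fB C cC sC e eC ef) h2).
Qed.
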